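(* Let $C_n$ be the cycle on $n\ge 3$ vertices. Every ordered multiplicity list that is realized by some matrix in $\mathcal{S}(C_n)$ is realized by some matrix in $\mathcal{S}(C_n)$ that has the SMP.
   Context: For a graph $G$ on vertex set $\{1,\ldots,n\}$, $\mathcal{S}(G)$ is the set of real symmetric $n\times n$ matrices whose $(i,j)$-entry for $i\neq j$ is nonzero if and only if $\{i,j\}$ is an edge (diagonal entries arbitrary). For symmetric $A$ with distinct eigenvalues $\lambda_1<\cdots<\lambda_q$ of multiplicities $m_1,\ldots,m_q$, the ordered multiplicity list is $\mathbf{m}(A)=(m_1,\ldots,m_q)$. $\circ$ is the entrywise product and $[A,X]=AX-XA$. A symmetric matrix $A$ with $q$ distinct eigenvalues has the strong multiplicity property (SMP) if $X=O$ is the only real symmetric matrix with $A\circ X=O$, $I\circ X=O$, $[A,X]=O$ and $\operatorname{tr}(A^kX)=0$ for $k=0,\ldots,q-1$. *)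

(* Defs.v *)
From HB Require Import structures.
From mathcomp Require Import all_boot all_order all_algebra.
From mathcomp Require Import reals.
Set Implicit Arguments. Unset Strict Implicit. Unset Printing Implicit Defensive.
Import Order.TTheory GRing.Theory Num.Theory.
Local Open Scope ring_scope.

Definition cycle_adj (n : nat) (i j : 'I_n) : bool :=
  (nat_of_ord j == (i.+1 %% n)%N) || (nat_of_ord i == (j.+1 %% n)%N).

Definition in_S (R : realType) (n : nat) (adj : 'I_n -> 'I_n -> bool)
  (A : 'M[R]_n) : Prop :=
  A^T = A /\ (forall i j : 'I_n, i != j -> (A i j != 0) = adj i j).

Definition mult_list (R : realType) (n : nat) (A : 'M[R]_n) (m : seq nat) : Prop :=
  exists lam : seq R,
    [/\ size lam = size m, sorted <%R lam, all (fun k => 0 < k)%N m &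
        char_poly A = \prod_(i < size m) ('X - (lam`_i)%:P) ^+ (nth 0%N m i)].

Definition num_distinct_eig (R : realType) (n : nat) (A : 'M[R]_n) (q : nat) : Prop :=
  exists lam : seq R,
    [/\ size lam = q, uniq lam & forall x : R, eigenvalue A x = (x \in lam)].

Definition SMP (R : realType) (n : nat) (A : 'M[R]_n) : Prop :=
  A^T = A /\
  exists q : nat, num_distinct_eig A q /\
    forall X : 'M[R]_n,
      X^T = X ->
      (forall i j, A i j * X i j = 0) ->
      (forall i, X i i = 0) ->
      A *m X = X *m A ->
      (forall k : nat, (k < q)%N -> \tr (A ^+ k *m X) = 0) ->
      X = 0.

(* Main.v *)
From HB Require Import structures.
From mathcomp Require Import all_boot all_order all_algebra.
From mathcomp Require Import reals zify ring.
Require Import Defs.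
Import Order.TTheory GRing.Theory Num.Theory.
Local Open Scope ring_scope.

Section Alg.
Variables (R : realType) (N : nat).
Local Notation n := N.+3.

Lemma trmxX (B : 'M[R]_n) k : B^T = B -> (B ^+ k)^T = B ^+ k.
Proof.
move=> HB; elim: k => [|k IH]; first by rewrite !expr0 trmx1.
by rewrite exprS trmx_mul IH HB -exprS exprSr.
Qed.

Lemma trTmul0 (B : 'M[R]_n) : B^T *m B = 0 -> B = 0.
Proof.
move=> H; apply/matrixP=> i j; rewrite mxE.
have : (B^T *m B) j j = 0 by rewrite H mxE.
rewrite mxE => /eqP; rewrite psumr_eq0; last by move=> l _; rewrite mxE -expr2 sqr_ge0.
move=> /allP /(_ i (mem_index_enum _)) /implyP /(_ isT).
by rewrite mxE -expr2 sqrf_eq0 => /eqP.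
Qed.

Lemma sym_nil (B : 'M[R]_n) m : B^T = B -> B ^+ m.+1 = 0 -> B = 0.
Proof.
move=> HB; elim: m => [|m IH]; first by rewrite expr1.
move=> Hm; apply: IH; apply: trTmul0.
rewrite trmxX // mulmxE -exprD.
have Hle : (m.+2 <= m.+1 + m.+1)%N by rewrite addnS ltnS leq_addr.
rewrite -(subnK Hle) exprD Hm. by rewrite mulr0.
Qed.

Lemma horner_sym (B : 'M[R]_n) p : B^T = B -> (horner_mx B p)^T = horner_mx B p.
Proof.
move=> HB; rewrite -[p]coefK poly_def !rmorph_sum /= raddf_sum /=.
apply: eq_bigr => i _; rewrite linearZ /= rmorphXn /= horner_mx_X.
by rewrite linearZ /= trmxX.
Qed.

Lemma minpoly_sym (A : 'M[R]_n) (lam : seq R) (m : seq nat) :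
  A^T = A -> size lam = size m ->
  char_poly A = \prod_(i < size m) ('X - (lam`_i)%:P) ^+ (nth 0%N m i) ->
  horner_mx A (\prod_(i < size m) ('X - (lam`_i)%:P)) = 0.
Proof.
move=> HA Hs Hc.
set p := \prod_(i < size m) _.
set M := (\max_(i < size m) nth 0 m i)%N.
have Hdec : p ^+ M.+1 = char_poly A * \prod_(i < size m) ('X - (lam`_i)%:P) ^+ (M.+1 - nth 0%N m i).
  rewrite Hc -big_split /= /p -prodrXl; apply: eq_bigr => i _.
  rewrite -exprD subnKC //; apply: leq_trans (leqnSn _).
  rewrite /M; exact: (@leq_bigmax _ (fun j : 'I_(size m) => nth 0%N m j) i).
apply: (@sym_nil _ M); first exact: horner_sym.
by rewrite -rmorphXn /= Hdec rmorphM /= Cayley_Hamilton mul0r.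
Qed.

Lemma trace_all (A X : 'M[R]_n) (lam : seq R) (m : seq nat) :
  A^T = A -> size lam = size m ->
  char_poly A = \prod_(i < size m) ('X - (lam`_i)%:P) ^+ (nth 0%N m i) ->
  (forall k : nat, (k < size m)%N -> \tr (A ^+ k *m X) = 0) ->
  forall k, \tr (A ^+ k *m X) = 0.
Proof.
move=> HA Hs Hc Htr k.
set p := \prod_(i < size m) ('X - (lam`_i)%:P).
have Hp : horner_mx A p = 0 by exact: minpoly_sym Hc.
have Hmon : p \is monic by apply: monic_prod => i _; apply: monicXsubC.
have Hsz : size p = (size m).+1.
  have -> : p = \prod_(x <- lam) ('X - x%:P).
    by rewrite (big_nth 0) big_mkord Hs.
  by rewrite size_prod_XsubC Hs.
have HAk : A ^+ k = horner_mx A ('X^k %% p).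
  rewrite -{1}(horner_mx_X A) -rmorphXn /= {1}(divp_eq ('X^k) p).
  by rewrite rmorphD rmorphM /= Hp mulr0 add0r.
rewrite HAk -[_ %% p]coefK poly_def !rmorph_sum /= mulmx_suml raddf_sum /=.
apply: big1 => i _; rewrite linearZ /= rmorphXn /= horner_mx_X -scalemxAl linearZ /=.
rewrite Htr ?mulr0 //.
have := ltn_modp ('X^k) p; rewrite Hsz (monic_neq0 Hmon) ltnS => H.
by apply: leq_trans H; case: i.
Qed.
End Alg.
Section Zp.
Variable N : nat.
Local Notation n := N.+3.
Local Notation T := 'I_n.

Lemma valD' (u v : T) : nat_of_ord (u + v) =
  if (nat_of_ord u + nat_of_ord v < n)%N then (nat_of_ord u + nat_of_ord v)%N else (nat_of_ord u + nat_of_ord v - n)%N.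
Proof.
rewrite /=; case: ltnP => h; first by rewrite modn_small.
have hu := ltn_ord u; have hv := ltn_ord v.
rewrite -{1}(subnK h) modnDr modn_small //; lia.
Qed.

Lemma valN' (u : T) : nat_of_ord (- u) = if nat_of_ord u == 0%N then 0%N else (n - nat_of_ord u)%N.
Proof.
rewrite /=; case: eqP => h; first by rewrite h subn0 modnn.
have hu := ltn_ord u; rewrite modn_small //; lia.
Qed.

Lemma valord (u : T) : (nat_of_ord u < n)%N. Proof. exact: ltn_ord. Qed.

Lemma val1' : nat_of_ord (1 : T) = 1%N. Proof. by []. Qed.

Lemma valnat (k : nat) : (k < n)%N -> nat_of_ord (k%:R : T) = k.
Proof. by move=> h; rewrite Zp_nat /= modn_small. Qed.

Lemma eqTE (u v : T) : (u == v) = (nat_of_ord u == nat_of_ord v).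
Proof. by []. Qed.

End Zp.
Arguments valord {N} u.

Ltac zpv := repeat (first [rewrite valD' | rewrite valN' | rewrite val1']).
Ltac zpc := repeat (case: ifP); intros.
Ltac zpk := repeat match goal with H : nat_of_ord (_%:R) = _ |- _ => rewrite H end.
Ltac zpt := zpv; zpk; zpc; lia.

Lemma cycle_adj_E N (i j : 'I_N.+3) : cycle_adj i j = (j == i + 1) || (i == j + 1).
Proof.
rewrite /cycle_adj !eqTE; zpv.
have hi := ltn_ord i; have hj := ltn_ord j.
have h1 : forall x : nat, (x < N.+3)%N -> (x.+1 %% N.+3 = if (x + 1 < N.+3)%N then x + 1 else x + 1 - N.+3)%N.
  move=> x hx; case: ifP => h; first by rewrite modn_small; lia.
  have -> : x.+1 = N.+3 by lia.
  by rewrite modnn; lia.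
rewrite !h1 //; zpc; lia.
Qed.

Section Cyc.
Variables (R : realType) (N : nat).
Local Notation n := N.+3.
Local Notation T := 'I_n.
Variables (A X : 'M[R]_n).
Hypothesis HAs : A^T = A.
Hypothesis HAadj : forall i j : T, i != j -> (A i j != 0) = cycle_adj i j.
Hypothesis HXs : X^T = X.
Hypothesis HXA : forall i j, A i j * X i j = 0.
Hypothesis HXd : forall i, X i i = 0.
Hypothesis HC : A *m X = X *m A.
Hypothesis Htr : forall k, \tr (A ^+ k *m X) = 0.

Definition far (k : nat) (u : T) := ((k <= nat_of_ord u)%N && (nat_of_ord u + k <= n)%N).
Definition a (i : T) := A i (i + 1).
Definition P (i : T) (k : nat) := \prod_(t < k) a (i + t%:R).

Lemma symA i j : A i j = A j i.
Proof. by rewrite -{1}HAs mxE. Qed.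
Lemma symX i j : X i j = X j i.
Proof. by rewrite -{1}HXs mxE. Qed.

Lemma A_zero (i j : T) : i != j -> j != i + 1 -> i != j + 1 -> A i j = 0.
Proof.
move=> h1 h2 h3; apply/eqP; apply: contraTT isT => h.
by move: h; rewrite HAadj // cycle_adj_E (negbTE h2) (negbTE h3).
Qed.

Lemma a_neq0 i : a i != 0.
Proof.
rewrite /a HAadj ?cycle_adj_E ?eqxx //.
rewrite eqTE; zpv; have := valord i; zpc; lia.
Qed.

Lemma Xedge (i j : T) : j = i + 1 -> X i j = 0.
Proof.
move=> ->; have := HXA i (i + 1); move/eqP; rewrite mulf_eq0.
by have /negbTE -> := a_neq0 i; move=> /= /eqP.
Qed.

Definition Z k := forall i j : T, ~~ far k (j - i) -> X i j = 0.

Lemma Z2 : Z 2.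
Proof.
move=> i j; case: (eqVneq j i) => [->|hji]; first by rewrite HXd.
case: (eqVneq j (i + 1)) => [h|h1]; first by rewrite Xedge.
case: (eqVneq i (j + 1)) => [h|h2]; first by rewrite symX Xedge.
move=> hf; exfalso; move: hji h1 h2 hf; rewrite /far !eqTE; zpv.
have := valord i; have := valord j; zpc; lia.
Qed.


Lemma rec k : (2 <= k)%N -> (k.*2 <= n)%N -> Z k -> forall i : T,
  a i * X i (i + k%:R) = a (i + 1 + (k.-1)%:R) * X (i + 1) (i + 1 + k%:R).
Proof.
move=> hk2 hkn HZ i.
have hk : nat_of_ord (k%:R : T) = k by apply: valnat; lia.
have hk1 : nat_of_ord ((k.-1)%:R : T) = k.-1 by apply: valnat; lia.
have hkS : (k.-1)%:R + 1 = k%:R :> T by rewrite natr1 prednK //; lia.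
set j := i + 1; set m := j + (k.-1)%:R.
have hm1 : m + 1 = j + k%:R by rewrite /m -addrA hkS.
have him : m = i + k%:R by rewrite /m /j -addrA (addrC 1) hkS.
have := congr1 (fun M : 'M[R]_n => M j m) HC; rewrite !mxE.
rewrite (bigD1 i) //= big1 ?addr0; last first.
  move=> l hl.
  case: (eqVneq l j) => [->|hlj].
    rewrite HZ ?mulr0 //; rewrite /far /m; zpv; rewrite hk1.
    have := valord i; zpc; lia.
  case: (eqVneq l (j + 1)) => [->|hlj1].
    rewrite HZ ?mulr0 //; rewrite /far /m /j; zpv; rewrite hk1.
    have := valord i; zpc; lia.
  rewrite A_zero ?mul0r //.
  - by rewrite eq_sym.
  - move: hl; rewrite /j !eqTE; zpv; have := valord i; have := valord l; zpc; lia.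
rewrite (bigD1 (m + 1)) //= big1 ?addr0; last first.
  move=> l hl.
  case: (eqVneq l m) => [->|hlm].
    rewrite HZ ?mul0r //; rewrite /far /m; zpv; rewrite hk1.
    have := valord i; zpc; lia.
  case: (eqVneq (l + 1) m) => [hl1|hl1].
    rewrite HZ ?mul0r //; move/eqP: hl1; rewrite /far /m /j !eqTE; zpv; rewrite hk1.
    have := valord i; have := valord l; zpc; lia.
  rewrite A_zero ?mulr0 //.
  - by rewrite eq_sym.
have E1 : A j i = a i by rewrite symA.
have E2 : A (m + 1) m = a m by rewrite symA.
rewrite E1 E2 -him hm1 => ->.
by rewrite mulrC.
Qed.


Definition Q k i := P i k * X i (i + k%:R).

Lemma Qstep k : (2 <= k)%N -> (k.*2 <= n)%N -> Z k -> forall i : T,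
  Q k i = Q k (i + 1).
Proof.
move=> hk2 hkn HZ i.
have := @rec k hk2 hkn HZ i.
rewrite /Q /P -(prednK (_ : 0 < k)%N); last lia.
rewrite big_ord_recl big_ord_recr /= addr0.
under eq_bigr => t _ do rewrite /bump /= add1n -natr1 addrA addrAC.
set p := \prod_(t < _) _; set x := X i _; set y := X (i + 1) _; set b := a (i + 1 + _).
move=> E; have -> : a i * p * x = p * (a i * x) by ring.
by rewrite E; ring.
Qed.

Lemma Qconst k : (2 <= k)%N -> (k.*2 <= n)%N -> Z k -> forall i : T,
  Q k i = Q k 0.
Proof.
move=> hk2 hkn HZ.
have H : forall t : nat, Q k (t%:R) = Q k 0.
  by elim => [|t IH] //; rewrite -natr1 -Qstep.
move=> i; have -> : i = (nat_of_ord i)%:R.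
  by apply/eqP; rewrite eqTE valnat // valord.
exact: H.
Qed.


Lemma sum_if (c : T) (b : bool) (F : T -> R) :
  \sum_l (if (l == c) && b then F l else 0) = if b then F c else 0.
Proof.
case: b; last by rewrite big1 // => l; rewrite andbF.
rewrite (bigD1 c) //= eqxx big1 ?addr0 // => l /negbTE ->; by [].
Qed.

Lemma P1 i : P i 1 = a i.
Proof. by rewrite /P big_ord1 /= mulr0n addr0. Qed.

Lemma PS i k : P i k.+1 = P i k * a (i + k%:R).
Proof. by rewrite /P big_ord_recr. Qed.

Lemma PSl i k : P i k.+1 = a i * P (i + 1) k.
Proof.
rewrite /P big_ord_recl /= mulr0n addr0; congr (_ * _).
by apply: eq_bigr => t _; rewrite /bump /= add1n -natr1 addrA addrAC.
Qed.

Lemma Apow k : (1 <= k)%N -> (k.*2 <= n)%N -> forall i j : T, far k (j - i) ->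
  (A ^+ k) i j = (if j == i + k%:R then P i k else 0) + (if i == j + k%:R then P j k else 0).
Proof.
elim: k => [//|k IH] _ hkn i j.
have hk1 : nat_of_ord (k.+1%:R : T) = k.+1 by apply: valnat; lia.
have hk : nat_of_ord (k%:R : T) = k by apply: valnat; lia.
case: (posnP k) => [k0|kpos].
  subst k; rewrite expr1 !P1 mulr1n => hf.
  case: (eqVneq j (i + 1)) => [hj|hj].
    have -> : (i == j + 1) = false.
      by apply/negbTE; move: hj => /eqP; rewrite !eqTE; have := valord i; have := valord j; zpt.
    by rewrite hj addr0.
  case: (eqVneq i (j + 1)) => [hi|hi].
    by rewrite add0r hi symA.
  rewrite A_zero ?addr0 //.
  by move: hf; rewrite /far !eqTE; have := valord i; have := valord j; zpt.
move=> hf.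
have hkn' : (k.*2 <= n)%N by lia.
have IH' := IH kpos hkn'.
have HG : forall l, (A ^+ k) i l * A l j =
  (if (l == i + k%:R) && (j == i + k.+1%:R) then P i k * a l else 0) +
  (if (l == j + 1) && (i == j + k.+1%:R) then P l k * a j else 0).
  move=> l.
  case: (eqVneq l j) => [->|hlj].
    rewrite IH'; last by move: hf; rewrite /far; have := valord i; have := valord j; zpt.
    have -> : (j == i + k%:R) = false.
      by apply/negbTE; move: hf; rewrite /far !eqTE; have := valord i; have := valord j; zpt.
    have -> : (i == j + k%:R) = false.
      by apply/negbTE; move: hf; rewrite /far !eqTE; have := valord i; have := valord j; zpt.
    have -> : (j == j + 1) = false.
      by apply/negbTE; rewrite !eqTE; have := valord j; zpt.
    by rewrite /= !addr0 mul0r.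
  case: (eqVneq (l + 1) j) => [hl|hl1].
    subst j.
    rewrite IH'; last by move: hf; rewrite /far; have := valord i; have := valord l; zpt.
    have -> : (i == l + k%:R) = false.
      by apply/negbTE; move: hf; rewrite /far !eqTE; have := valord i; have := valord l; zpt.
    have -> : (l + 1 == i + k.+1%:R) = (l == i + k%:R).
      by rewrite !eqTE; have := valord i; have := valord l; zpt.
    have -> : (l == l + 1 + 1) = false.
      by apply/negbTE; rewrite !eqTE; have := valord l; zpt.
    rewrite andbb !addr0 -/(a l).
    by case: ifP; rewrite ?mul0r.
  case: (eqVneq l (j + 1)) => [hl|hl2].
    subst l.
    rewrite IH'; last by move: hf; rewrite /far; have := valord i; have := valord j; zpt.
    have -> : (j + 1 == i + k%:R) = false.
      by apply/negbTE; move: hf; rewrite /far !eqTE; have := valord i; have := valord j; zpt.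
    have -> : (i == j + 1 + k%:R) = (i == j + k.+1%:R).
      by rewrite !eqTE; have := valord i; have := valord j; zpt.
    rewrite symA -/(a j) /= !add0r.
    by case: ifP; rewrite ?mul0r.
  rewrite [A l j]A_zero ?mulr0 //; last by rewrite eq_sym.
  have -> : ((l == i + k%:R) && (j == i + k.+1%:R)) = false.
    by apply/negbTE; move: hl1; rewrite !eqTE; have := valord i; have := valord j; have := valord l; zpt.
  by rewrite addr0.
rewrite exprSr -mulmxE mxE (eq_bigr _ (fun l _ => HG l)) big_split /= !sum_if PS PSl.
by congr (_ + _); case: ifP => //; rewrite mulrC.
Qed.


Lemma sum_if1 (c : T) (F : R) :
  \sum_l (if l == c then F else 0) = F.
Proof. by rewrite -big_mkcond big_pred1_eq. Qed.

Lemma P_neq0 i k : P i k != 0.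
Proof.
apply/negP; rewrite /P => /prodf_eq0 [t _ /eqP h].
by have := a_neq0 (i + t%:R); rewrite h eqxx.
Qed.

Lemma Zstep k : (2 <= k)%N -> (k.*2 <= n)%N -> Z k -> Z k.+1.
Proof.
move=> hk2 hkn HZ.
have hk : nat_of_ord (k%:R : T) = k by apply: valnat; lia.
have HT : forall i j : T, (A ^+ k) i j * X j i =
   (if j == i + k%:R then Q k i else 0) + (if i == j + k%:R then Q k j else 0).
  move=> i j; case: (boolP (far k (j - i))) => hf.
    rewrite Apow //; last lia.
    rewrite mulrDl; congr (_ + _); case: eqP => [->|]; rewrite ?mul0r // /Q.
      by rewrite symX.
  rewrite HZ ?mulr0; last first.
    by move: hf; rewrite /far; have := valord i; have := valord j; zpt.
  have -> : (j == i + k%:R) = false.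
    by apply/negbTE; move: hf; rewrite /far !eqTE; have := valord i; have := valord j; zpt.
  have -> : (i == j + k%:R) = false.
    by apply/negbTE; move: hf; rewrite /far !eqTE; have := valord i; have := valord j; zpt.
  by rewrite addr0.
have E : \tr (A ^+ k *m X) = (\sum_i Q k i) *+ 2.
  rewrite /mxtrace; transitivity (\sum_i (\sum_j (if j == i + k%:R then Q k i else 0)
   + \sum_j (if i == j + k%:R then Q k j else 0))).
    by apply: eq_bigr => i _; rewrite mxE -big_split; apply: eq_bigr => j _; rewrite HT.
  rewrite big_split /= [in X in _ + X = _]exchange_big /= mulr2n.
  by congr (_ + _); apply: eq_bigr => i _; rewrite sum_if1.
have HQ0 : Q k 0 = 0.
  move: (Htr k); rewrite E (eq_bigr (fun _ => Q k 0)); last by move=> i _; rewrite (@Qconst k).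
  rewrite sumr_const card_ord -mulrnA => /eqP; rewrite mulrn_eq0 /= => /eqP //.
have HXk : forall i, X i (i + k%:R) = 0.
  move=> i; have := @Qconst k hk2 hkn HZ i; rewrite HQ0 /Q => /eqP.
  by rewrite mulf_eq0 (negbTE (P_neq0 _ _)) /= => /eqP.
move=> i j hf.
case: (eqVneq j (i + k%:R)) => [->|h1]; first exact: HXk.
case: (eqVneq i (j + k%:R)) => [->|h2]; first by rewrite symX HXk.
apply: HZ; move: hf h1 h2; rewrite /far !eqTE; have := valord i; have := valord j; zpt.
Qed.



Lemma Xzero : X = 0.
Proof.
have HZall : forall k, (2 <= k)%N -> ((k.-1).*2 <= n)%N -> Z k.
  elim => [//|k IH] h2 hle.
  case: (eqVneq k 1%N) => [->|hk1]; first exact: Z2.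
  apply: Zstep; [lia | lia | apply: IH; lia].
have hodd := odd_double_half n.
have hb : odd n = odd n by [].
apply/matrixP => i j; rewrite mxE.
apply: (HZall (n./2).+1).
- move: hodd; case: (odd n) => /=; lia.
- move: hodd; case: (odd n) => /=; lia.
- rewrite /far; move: hodd; have := valord (j - i); case: (odd n) => /=; lia.
Qed.

End Cyc.

Theorem theorem4p2 (R : realType) (n : nat) (m : seq nat) :
  (3 <= n)%N ->
  (exists A : 'M[R]_n, in_S (@cycle_adj n) A /\ mult_list A m) ->
  exists B : 'M[R]_n, [/\ in_S (@cycle_adj n) B, mult_list B m & SMP B].
Proof.
case: n => [|[|[|N]]] // _ [A [HS Hm]].
exists A; split => //.
case: HS => HAs HAadj; case: Hm => lam [Hs Hsort Hpos Hc].
split => //; exists (size m); split.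
  exists lam; split => //; first exact: lt_sorted_uniq.
  move=> x; rewrite eigenvalue_root_char Hc /root horner_prod.
  under eq_bigr do rewrite horner_exp hornerXsubC.
  apply/idP/idP.
    move/prodf_eq0 => [i _]; rewrite expf_eq0 => /andP [_]; rewrite subr_eq0 => /eqP ->.
    by apply: mem_nth; rewrite Hs.
  move=> hx; apply/prodf_eq0; have [i hi hxi] := nthP 0 hx.
  have him : (i < size m)%N by rewrite -Hs.
  exists (Ordinal him) => //=.
  rewrite expf_eq0 -hxi subrr eqxx andbT.
  by move/allP: Hpos; apply; apply: mem_nth.
move=> X HXs HXA HXd HC Htr.
have Htr' := @trace_all R N A X lam m HAs Hs Hc Htr.
exact: (@Xzero R N A X HAs HAadj HXs HXA HXd HC Htr').
Qed.
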